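(* Let $b,d>0$ and $c\in\mathbb{R}$, and define $P_5:\mathbb{R}^{3\times3}\to\mathbb{R}$ by $P_5(R)=\sqrt{(\|R^TR-I\|_F+c)^2+b}$. On the open set $U=\{R:\|R^TR-I\|_F>d\}$, $P_5$ is twice differentiable with locally Lipschitz second derivatives, and there is a constant $L$ such that $-LI\preceq\nabla^2P_5(R)\preceq LI$ for all $R\in U$.
   Context: $\|\cdot\|_F$ is the Frobenius norm; $R$ is identified with a vector in $\mathbb{R}^9$. *)

(* Defs.v *)
From HB Require Import structures.
From mathcomp Require Import all_boot all_order all_algebra.
From mathcomp Require Import all_classical all_reals all_analysis.
Set Implicit Arguments. Unset Strict Implicit. Unset Printing Implicit Defensive.
Import Order.TTheory GRing.Theory Num.Theory.
Import numFieldNormedType.Exports.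
Local Open Scope classical_set_scope.
Local Open Scope ring_scope.

Definition frob {K : realType} {m n : nat} (A : 'M[K]_(m, n)) : K :=
  Num.sqrt (\sum_(i < m) \sum_(j < n) A i j ^+ 2).

Definition P5 {K : realType} (b c : K) (X : 'M[K]_3) : K :=
  Num.sqrt ((frob (X^T *m X - 1%:M) + c) ^+ 2 + b).

Definition Uset {K : realType} (d : K) : set 'M[K]_3 :=
  [set X | d < frob (X^T *m X - 1%:M)].

(* Identification of 'M_3 with R^9: k-th standard basis matrix. *)
Definition ebasis {K : realType} (k : 'I_(3 * 3)) : 'M[K]_3 :=
  vec_mx (delta_mx 0 k).

(* f : R^{3x3} -> R is twice (Frechet) differentiable at every point of U:
   f is differentiable there, and so is each partial derivative
   (equivalently, the derivative map Df is differentiable). *)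
Definition twice_differentiable_on {K : realType} (U : set 'M[K]_3)
    (f : 'M[K]_3 -> K) : Prop :=
  forall X, U X ->
    differentiable f X /\
    forall k : 'I_(3 * 3), differentiable (fun Y => 'D_(ebasis k) f Y) X.

Definition hessian {K : realType} (f : 'M[K]_3 -> K) (X : 'M[K]_3)
    : 'M[K]_(3 * 3) :=
  \matrix_(i, j) 'D_(ebasis i) (fun Y => 'D_(ebasis j) f Y) X.

Definition hessian_locally_lipschitz_on {K : realType} (U : set 'M[K]_3)
    (f : 'M[K]_3 -> K) : Prop :=
  forall X, U X -> exists r : K, exists Lc : K, 0 < r /\
    forall Y Z, U Y -> U Z -> frob (Y - X) < r -> frob (Z - X) < r ->
      frob (hessian f Y - hessian f Z) <= Lc * frob (Y - Z).

Definition psd {K : realType} {n : nat} (A : 'M[K]_n) : Prop :=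
  forall v : 'rV[K]_n, 0 <= (v *m A *m v^T) 0 0.

Definition loewner_le {K : realType} {n : nat} (A B : 'M[K]_n) : Prop :=
  psd (B - A).

(* Main.v *)
Require Import Defs.
From HB Require Import structures.
From mathcomp Require Import all_boot all_order all_algebra.
From mathcomp Require Import all_classical all_reals all_analysis.
From mathcomp Require Import ring lra.
Import Order.TTheory GRing.Theory Num.Theory.
Import numFieldNormedType.Exports.
Local Open Scope classical_set_scope.
Local Open Scope ring_scope.


Lemma derive_line {K : realType} {V : normedModType K} (g : V -> K) (Y v : V) :
  'D_v g Y = 'D_1 (fun t : K => g (t *: v + Y)) 0.
Proof.
rewrite /derive.
suff -> : (fun h : K => h^-1 *: (g (h *: v + Y) - g Y)) =
  (fun h : K => h^-1 *: ((fun t : K => g (t *: v + Y)) (h *: 1 + 0) - (fun t : K => g (t *: v + Y)) 0)) by [].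
by apply/funext => h /=; rewrite addr0 scale0r add0r [_%:A]mulr1.
Qed.

Lemma is_derive_line {K : realType} {V : normedModType K} (g : V -> K) (Y v : V) dg :
  is_derive Y v g dg <-> is_derive (0:K) 1 (fun t : K => g (t *: v + Y)) dg.
Proof.
split=> -[h1 h2]; split.
- exact: ((derivable1P g Y v).1 h1).
- by rewrite -derive_line.
- exact: ((derivable1P g Y v).2 h1).
- by rewrite derive_line.
Qed.

Lemma is_derive_chain {K : realType} {V : normedModType K} (g : V -> K) (h : K -> K)
   (Y v : V) dg dh :
  is_derive Y v g dg -> is_derive (g Y) 1 h dh ->
  is_derive Y v (fun y => h (g y)) (dh * dg).
Proof.
move=> /is_derive_line G H; apply/is_derive_line.
have H' : is_derive ((fun t : K => g (t *: v + Y)) 0) 1 h dh.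
  by rewrite /= scale0r add0r.
exact: (@is_derive1_comp K h (fun t : K => g (t *: v + Y)) 0 dh dg H' G).
Qed.

Lemma near0_differentiable {K : realType} {V : normedModType K} (h : V -> K) (x : V) :
  (\near x, h x = 0) -> differentiable h x.
Proof.
move=> hx.
have hx0 : h x = 0 by exact: (nbhs_singleton hx).
have E : h \o shift x = cst (h x) + \0 +o_ (0:V) id.
  apply/eqaddoP => eps eps0.
  move: hx; rewrite (nbhs0P _ x) => hx.
  near=> e => /=.
  rewrite hx0 /= !fctE addr0 subr0 addrC.
  have -> : h (x + e) = 0 by near: e.
  by rewrite normr0 mulr_ge0// ltW.
apply/diff_locallyP.
have -> : 'd h x = \0 :> (V -> K) by apply: diff_unique => //; exact: cst_continuous.
by split => //; exact: cst_continuous.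
Unshelve. all: by end_near. Qed.

Lemma near_eq_differentiable {K : realType} {V : normedModType K} (f g : V -> K) (x : V) :
  (\near x, f x = g x) -> differentiable f x -> differentiable g x.
Proof.
move=> fg df.
have -> : g = f + (g - f) by apply/funext => y; rewrite !fctE addrC subrK.
apply: differentiableD => //; apply: near0_differentiable.
by near=> y; rewrite !fctE (near fg y) // subrr.
Unshelve. all: by end_near. Qed.




Lemma isd_sum {K : realType} {V : normedModType K} {n} {F : 'I_n -> V -> K} {dF x v} :
  (forall k, is_derive x v (F k) (dF k)) ->
  is_derive x v (fun y => \sum_(k < n) F k y) (\sum_(k < n) dF k).
Proof.
move=> H; rewrite -(fct_sumE (index_enum _) predT F).
exact: is_derive_sum.
Qed.

Lemma isd_mul {K : realType} {V : normedModType K} {f g : V -> K} {df dg x v} :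
  is_derive x v f df -> is_derive x v g dg ->
  is_derive x v (fun y => f y * g y) (f x * dg + g x * df).
Proof. move=> h1 h2; exact: (is_deriveM h1 h2). Qed.

Lemma isd_add {K : realType} {V : normedModType K} {f g : V -> K} {df dg x v} :
  is_derive x v f df -> is_derive x v g dg ->
  is_derive x v (fun y => f y + g y) (df + dg).
Proof. move=> h1 h2; exact: (is_deriveD h1 h2). Qed.

Lemma isd_sub {K : realType} {V : normedModType K} {f g : V -> K} {df dg x v} :
  is_derive x v f df -> is_derive x v g dg ->
  is_derive x v (fun y => f y - g y) (df - dg).
Proof. move=> h1 h2; exact: (is_deriveB h1 h2). Qed.

Lemma isd_cst {K : realType} {V : normedModType K} (a : K) (x v : V) :
  is_derive x v (fun _ : V => a) 0.
Proof. exact: is_derive_cst. Qed.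

Lemma isd_inv {K : realType} {V : normedModType K} {f : V -> K} {df x v} :
  f x != 0 -> is_derive x v f df ->
  is_derive x v (fun y => (f y)^-1) (- (f x)^-2 * df).
Proof.
move=> fx [h1 h2]; split; first exact: derivableV.
by rewrite deriveV // h2.
Qed.

Lemma isd_coord {K : realType} (Y v : 'M[K]_3) i j :
  is_derive Y v (fun N : 'M[K]_3 => N i j) (v i j).
Proof.
apply/is_derive_line.
have -> : (fun t : K => (t *: v + Y) i j) = (fun t => t * v i j + Y i j).
  by apply/funext => t; rewrite !mxE.
have h1 : is_derive (0:K) 1 (fun t : K => t) 1 := is_derive_id _ _.
have h2 := isd_mul h1 (isd_cst (v i j) (0:K) (1:K)).
have h3 := isd_add h2 (isd_cst (Y i j) (0:K) (1:K)).
apply: (is_derive_eq h3).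
by rewrite mul0r add0r mulr1 addr0.
Qed.

Lemma isd_sqrt {K : realType} {V : normedModType K} {f : V -> K} {df x v} :
  0 < f x -> is_derive x v f df ->
  is_derive x v (fun y => Num.sqrt (f y)) ((2 * Num.sqrt (f x))^-1 * df).
Proof.
move=> fx h; apply: (is_derive_chain _ Num.sqrt _ _ _ _ h).
exact: is_derive1_sqrt.
Qed.


Definition Sm {K : realType} (Y : 'M[K]_3) (i j : 'I_3) : K :=
  \sum_(k < 3) Y k i * Y k j - (i == j)%:R.
Definition dSm {K : realType} (Y v : 'M[K]_3) (i j : 'I_3) : K :=
  \sum_(k < 3) (Y k i * v k j + Y k j * v k i).
Definition d2S {K : realType} (u v : 'M[K]_3) (i j : 'I_3) : K :=
  \sum_(k < 3) (v k i * u k j + v k j * u k i).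
Definition qf {K : realType} (Y : 'M[K]_3) : K :=
  \sum_(i < 3) \sum_(j < 3) Sm Y i j ^+ 2.
Definition dq {K : realType} (Y v : 'M[K]_3) : K :=
  \sum_(i < 3) \sum_(j < 3) 2 * (Sm Y i j * dSm Y v i j).
Definition d2q {K : realType} (Y u v : 'M[K]_3) : K :=
  \sum_(i < 3) \sum_(j < 3) 2 * (dSm Y u i j * dSm Y v i j + Sm Y i j * d2S u v i j).
Definition sf {K : realType} (Y : 'M[K]_3) : K := Num.sqrt (qf Y).
Definition ds {K : realType} (Y v : 'M[K]_3) : K := (2 * sf Y)^-1 * dq Y v.
Definition psi {K : realType} (b c t : K) : K := Num.sqrt ((t + c) ^+ 2 + b).
Definition dP {K : realType} (b c : K) (Y v : 'M[K]_3) : K :=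
  (sf Y + c) * (psi b c (sf Y))^-1 * ds Y v.
Definition Hf {K : realType} (b c : K) (Y u v : 'M[K]_3) : K :=
  b * (psi b c (sf Y))^-1 ^+ 3 * ds Y u * ds Y v
  + (sf Y + c) * (psi b c (sf Y))^-1 * ((2 * sf Y)^-1 * (d2q Y u v - 2 * (ds Y u * ds Y v))).

Lemma isd_Sm {K : realType} (Y v : 'M[K]_3) i j :
  is_derive Y v (fun Z => Sm Z i j) (dSm Y v i j).
Proof.
rewrite /Sm.
have h := isd_sub (isd_sum (fun k => isd_mul (isd_coord Y v k i) (isd_coord Y v k j)))
   (isd_cst ((i == j)%:R : K) Y v).
apply: (is_derive_eq h).
by rewrite subr0 /dSm.
Qed.

Lemma isd_dSm {K : realType} (Y u v : 'M[K]_3) i j :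
  is_derive Y u (fun Z => dSm Z v i j) (d2S u v i j).
Proof.
rewrite /dSm.
have h := isd_sum (fun k => isd_add (isd_mul (isd_coord Y u k i) (isd_cst (v k j) Y u))
                                  (isd_mul (isd_coord Y u k j) (isd_cst (v k i) Y u))).
apply: (is_derive_eq h).
rewrite /d2S; apply: eq_bigr => k _; ring.
Qed.

Lemma isd_qf {K : realType} (Y v : 'M[K]_3) :
  is_derive Y v qf (dq Y v).
Proof.
have -> : (qf : 'M[K]_3 -> K) = fun Z => \sum_(i < 3) \sum_(j < 3) Sm Z i j * Sm Z i j.
  by apply/funext => Z; rewrite /qf; apply: eq_bigr => i _; apply: eq_bigr => j _; rewrite expr2.
have h := isd_sum (fun i => isd_sum (fun j => isd_mul (isd_Sm Y v i j) (isd_Sm Y v i j))).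
apply: (is_derive_eq h).
rewrite /dq; apply: eq_bigr => i _; apply: eq_bigr => j _; ring.
Qed.

Lemma isd_dq {K : realType} (Y u v : 'M[K]_3) :
  is_derive Y u (fun Z => dq Z v) (d2q Y u v).
Proof.
rewrite /dq.
have h := isd_sum (fun i => isd_sum (fun j => isd_mul (isd_cst (2:K) Y u)
   (isd_mul (isd_Sm Y u i j) (isd_dSm Y u v i j)))).
apply: (is_derive_eq h).
rewrite /d2q; apply: eq_bigr => i _; apply: eq_bigr => j _; ring.
Qed.

Lemma isd_sf {K : realType} (Y v : 'M[K]_3) : 0 < qf Y ->
  is_derive Y v sf (ds Y v).
Proof.
move=> q0; have h := isd_sqrt q0 (isd_qf Y v).
exact: (is_derive_eq h).
Qed.

Lemma isd_ds {K : realType} (Y u v : 'M[K]_3) : 0 < qf Y ->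
  is_derive Y u (fun Z => ds Z v) ((2 * sf Y)^-1 * (d2q Y u v - 2 * (ds Y u * ds Y v))).
Proof.
move=> q0; rewrite /ds.
have s0 : 0 < sf Y by rewrite /sf sqrtr_gt0.
have n0 : 2 * sf Y != 0 by rewrite mulf_neq0 // gt_eqF.
have h1 := isd_mul (isd_cst (2:K) Y u) (isd_sf Y u q0).
have h2 := isd_inv (f := fun Z : 'M[K]_3 => 2 * sf Z) n0 h1.
have h := isd_mul h2 (isd_dq Y u v).
apply: (is_derive_eq h).
rewrite /ds. field. by rewrite gt_eqF.
Qed.

Lemma psi_gt0 {K : realType} (b c t : K) : 0 < b -> 0 < psi b c t.
Proof. by move=> b0; rewrite /psi sqrtr_gt0; apply: (lt_le_trans b0); rewrite lerDr sqr_ge0. Qed.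

Lemma psi_sqr {K : realType} (b c t : K) : 0 < b -> psi b c t ^+ 2 = (t + c) ^+ 2 + b.
Proof. by move=> b0; rewrite /psi sqr_sqrtr // addr_ge0 ?sqr_ge0 // ltW. Qed.

Lemma isd_psi {K : realType} (b c : K) (Y v : 'M[K]_3) : 0 < b -> 0 < qf Y ->
  is_derive Y v (fun Z => psi b c (sf Z)) (dP b c Y v).
Proof.
move=> b0 q0.
have -> : (fun Z => psi b c (sf Z)) =
   fun Z => Num.sqrt ((sf Z + c) * (sf Z + c) + b).
  by apply/funext => Z; rewrite /psi expr2.
have A0 : 0 < (sf Y + c) * (sf Y + c) + b.
  by apply: (lt_le_trans b0); rewrite lerDr -expr2 sqr_ge0.
have h1 := isd_add (isd_sf Y v q0) (isd_cst c Y v).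
have h2 := isd_add (isd_mul h1 h1) (isd_cst b Y v).
have h := isd_sqrt (f := fun Z => (sf Z + c) * (sf Z + c) + b) A0 h2.
apply: (is_derive_eq h).
rewrite /dP /psi -expr2.
have p0 : 0 < Num.sqrt ((sf Y + c) ^+ 2 + b) by rewrite sqrtr_gt0 -expr2 in A0 *.
move: (Num.sqrt ((sf Y + c) ^+ 2 + b)) p0 => p p0.
field; by rewrite gt_eqF.
Qed.

Lemma isd_dP {K : realType} (b c : K) (Y u v : 'M[K]_3) : 0 < b -> 0 < qf Y ->
  is_derive Y u (fun Z => dP b c Z v) (Hf b c Y u v).
Proof.
move=> b0 q0; rewrite /dP.
have p0 := psi_gt0 b c (sf Y) b0.
have hp := psi_sqr b c (sf Y) b0.
have s0 : 0 < sf Y by rewrite /sf sqrtr_gt0.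
have h1 := isd_add (isd_sf Y u q0) (isd_cst c Y u).
have h2 := isd_inv (f := fun Z => psi b c (sf Z)) (lt0r_neq0 p0) (isd_psi b c Y u b0 q0).
have h := isd_mul (isd_mul h1 h2) (isd_ds Y u v q0).
apply: (is_derive_eq h).
rewrite /Hf /dP.
move: (psi b c (sf Y)) p0 hp => p p0 hp.
have -> : b = p ^+ 2 - (sf Y + c) ^+ 2 by rewrite hp; ring.
field; by rewrite !gt_eqF.
Qed.


Lemma dif_add {K : realType} {V : normedModType K} {f g : V -> K} {x} :
  differentiable f x -> differentiable g x -> differentiable (fun y => f y + g y) x.
Proof. move=> h1 h2; exact: (differentiableD h1 h2). Qed.
Lemma dif_sub {K : realType} {V : normedModType K} {f g : V -> K} {x} :
  differentiable f x -> differentiable g x -> differentiable (fun y => f y - g y) x.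
Proof. move=> h1 h2; exact: (differentiableB h1 h2). Qed.
Lemma dif_mul {K : realType} {V : normedModType K} {f g : V -> K} {x} :
  differentiable f x -> differentiable g x -> differentiable (fun y => f y * g y) x.
Proof. move=> h1 h2; exact: (differentiableM h1 h2). Qed.
Lemma dif_cst {K : realType} {V : normedModType K} (a : K) (x : V) :
  differentiable (fun _ : V => a) x.
Proof. exact: differentiable_cst. Qed.
Lemma dif_inv {K : realType} {V : normedModType K} {f : V -> K} {x} :
  f x != 0 -> differentiable f x -> differentiable (fun y => (f y)^-1) x.
Proof. move=> h1 h2; exact: (differentiableV h2 h1). Qed.
Lemma dif_sum {K : realType} {V : normedModType K} {n} {F : 'I_n -> V -> K} {x} :
  (forall k, differentiable (F k) x) -> differentiable (fun y => \sum_(k < n) F k y) x.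
Proof.
move=> H; rewrite -(fct_sumE (index_enum _) predT F).
exact: differentiable_sum.
Qed.
Lemma dif_sqrt {K : realType} {V : normedModType K} {f : V -> K} {x} :
  0 < f x -> differentiable f x -> differentiable (fun y => Num.sqrt (f y)) x.
Proof.
move=> h1 h2.
have h3 : differentiable (@Num.sqrt K) (f x).
  apply/derivable1_diffP; exact: (@ex_derive _ _ _ _ _ _ _ (is_derive1_sqrt h1)).
exact: (differentiable_comp h2 h3).
Qed.
Lemma dif_coord {K : realType} (X : 'M[K]_3) i j :
  differentiable (fun N : 'M[K]_3 => N i j) X.
Proof. exact: differentiable_coord. Qed.

Lemma dif_Sm {K : realType} (X : 'M[K]_3) i j : differentiable (fun Z => Sm Z i j) X.
Proof.
rewrite /Sm; apply: dif_sub; last exact: dif_cst.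
apply: dif_sum => k; apply: dif_mul; exact: dif_coord.
Qed.

Lemma dif_dSm {K : realType} (X v : 'M[K]_3) i j : differentiable (fun Z => dSm Z v i j) X.
Proof.
rewrite /dSm; apply: dif_sum => k.
by apply: dif_add; apply: dif_mul; [exact: dif_coord|exact: dif_cst|exact: dif_coord|exact: dif_cst].
Qed.

Lemma dif_qf {K : realType} (X : 'M[K]_3) : differentiable qf X.
Proof.
have -> : (qf : 'M[K]_3 -> K) = fun Z => \sum_(i < 3) \sum_(j < 3) Sm Z i j * Sm Z i j.
  by apply/funext => Z; rewrite /qf; apply: eq_bigr => i _; apply: eq_bigr => j _; rewrite expr2.
apply: dif_sum => i; apply: dif_sum => j; apply: dif_mul; exact: dif_Sm.
Qed.

Lemma dif_dq {K : realType} (X v : 'M[K]_3) : differentiable (fun Z => dq Z v) X.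
Proof.
rewrite /dq; apply: dif_sum => i; apply: dif_sum => j.
apply: dif_mul; first exact: dif_cst.
apply: dif_mul; [exact: dif_Sm|exact: dif_dSm].
Qed.

Lemma dif_sf {K : realType} (X : 'M[K]_3) : 0 < qf X -> differentiable sf X.
Proof. move=> q0; exact: (dif_sqrt q0 (dif_qf X)). Qed.

Lemma dif_ds {K : realType} (X v : 'M[K]_3) : 0 < qf X -> differentiable (fun Z => ds Z v) X.
Proof.
move=> q0; rewrite /ds; apply: dif_mul; last exact: dif_dq.
have s0 : 0 < sf X by rewrite /sf sqrtr_gt0.
apply: (dif_inv (f := fun Z => 2 * sf Z)); first by rewrite mulf_neq0 // gt_eqF.
by apply: dif_mul; [exact: dif_cst|exact: dif_sf].
Qed.

Lemma dif_psi {K : realType} (b c : K) (X : 'M[K]_3) : 0 < b -> 0 < qf X ->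
  differentiable (fun Z => psi b c (sf Z)) X.
Proof.
move=> b0 q0.
have -> : (fun Z => psi b c (sf Z)) =
   fun Z => Num.sqrt ((sf Z + c) * (sf Z + c) + b).
  by apply/funext => Z; rewrite /psi expr2.
apply: (dif_sqrt (f := fun Z => (sf Z + c) * (sf Z + c) + b)).
  by apply: (lt_le_trans b0); rewrite lerDr -expr2 sqr_ge0.
apply: dif_add; last exact: dif_cst.
by apply: dif_mul; apply: dif_add; [exact: dif_sf|exact: dif_cst|exact: dif_sf|exact: dif_cst].
Qed.

Lemma dif_dP {K : realType} (b c : K) (X v : 'M[K]_3) : 0 < b -> 0 < qf X ->
  differentiable (fun Z => dP b c Z v) X.
Proof.
move=> b0 q0; rewrite /dP.
apply: dif_mul; last exact: dif_ds.
apply: dif_mul; first by apply: dif_add; [exact: dif_sf|exact: dif_cst].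
apply: (dif_inv (f := fun Z => psi b c (sf Z))); first by rewrite gt_eqF // psi_gt0.
exact: dif_psi.
Qed.


Lemma frobS {K : realType} (Y : 'M[K]_3) : frob (Y^T *m Y - 1%:M) = sf Y.
Proof.
rewrite /frob /sf /qf; congr Num.sqrt; apply: eq_bigr => i _; apply: eq_bigr => j _.
by rewrite /Sm !mxE; congr (_ ^+ 2); congr (_ - _); apply: eq_bigr => k _; rewrite !mxE.
Qed.

Lemma P5E {K : realType} (b c : K) : P5 b c = fun Y => psi b c (sf Y).
Proof. by apply/funext => Y; rewrite /P5 frobS. Qed.

Lemma U_qf {K : realType} (d : K) (Y : 'M[K]_3) : 0 < d -> Uset d Y -> 0 < qf Y.
Proof.
move=> d0; rewrite /Uset /= frobS /sf => h.
have : 0 < Num.sqrt (qf Y) by exact: lt_trans h.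
by rewrite sqrtr_gt0.
Qed.

Lemma near_U {K : realType} (d : K) (X : 'M[K]_3) : 0 < d -> Uset d X ->
  \forall Y \near X, Uset d Y.
Proof.
move=> d0 UX.
have q0 := U_qf d X d0 UX.
have hc : sf @ X --> sf X := differentiable_continuous (dif_sf X q0).
have UX' : d < sf X by move: UX; rewrite /Uset /= frobS.
apply: filterS (cvgr_gt _ hc _ UX') => Y /=; by rewrite /Uset /= frobS.
Qed.

Lemma open_U {K : realType} (d : K) : 0 < d -> open (Uset d).
Proof.
move=> d0; rewrite openE => X UX; exact: near_U.
Qed.

Lemma D_P5 {K : realType} (b c : K) (Y v : 'M[K]_3) : 0 < b -> 0 < qf Y ->
  'D_v (P5 b c) Y = dP b c Y v.
Proof. by move=> b0 q0; rewrite P5E; apply: derive_val; exact: isd_psi. Qed.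

Lemma near_DP5 {K : realType} (b c d : K) (X v : 'M[K]_3) : 0 < b -> 0 < d -> Uset d X ->
  \forall Y \near X, dP b c Y v = 'D_v (P5 b c) Y.
Proof.
move=> b0 d0 UX; apply: filterS (near_U d X d0 UX) => Y UY.
by rewrite D_P5 // (U_qf d Y d0 UY).
Qed.

Lemma twice_P5 {K : realType} (b c d : K) : 0 < b -> 0 < d ->
  twice_differentiable_on (Uset d) (P5 b c).
Proof.
move=> b0 d0 X UX; have q0 := U_qf d X d0 UX; split.
  by rewrite P5E; exact: dif_psi.
move=> k; apply: near_eq_differentiable (near_DP5 b c d X (ebasis k) b0 d0 UX) _.
exact: dif_dP.
Qed.

Lemma hessE {K : realType} (b c d : K) (X : 'M[K]_3) : 0 < b -> 0 < d -> Uset d X ->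
  hessian (P5 b c) X = \matrix_(i, j) Hf b c X (ebasis i) (ebasis j).
Proof.
move=> b0 d0 UX; have q0 := U_qf d X d0 UX.
apply/matrixP => i j; rewrite !mxE.
rewrite -(near_eq_derive _ (near_DP5 b c d X (ebasis j) b0 d0 UX)).
apply: derive_val; exact: isd_dP.
Qed.


Lemma sum3_le {K : realType} (f : 'I_3 -> K) (B : K) :
  (forall k, `|f k| <= B) -> `|\sum_(k < 3) f k| <= 3 * B.
Proof.
move=> H; rewrite !big_ord_recr big_ord0 /= add0r.
apply: (le_trans (ler_normD _ _)).
have h1 := H ord_max.
have h2 := H (widen_ord (leqnSn 2) ord_max).
have h3 := H (widen_ord (leqnSn 2) (widen_ord (leqnSn 1) ord_max)).
have := ler_normD (f (widen_ord (leqnSn 2) (widen_ord (leqnSn 1) ord_max)))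
                  (f (widen_ord (leqnSn 2) ord_max)).
set a := `| _ + _ |. lra.
Qed.

Lemma sum33_le {K : realType} (f : 'I_3 -> 'I_3 -> K) (B : K) :
  (forall i j, `|f i j| <= B) -> `|\sum_(i < 3) \sum_(j < 3) f i j| <= 9 * B.
Proof.
move=> H; have -> : (9 : K) * B = 3 * (3 * B) by ring.
apply: sum3_le => i; exact: sum3_le.
Qed.

Lemma le_sum1 {K : realType} n (F : 'I_n -> K) i0 :
  (forall i, 0 <= F i) -> F i0 <= \sum_(i < n) F i.
Proof. by move=> H; rewrite (bigD1 i0) //= lerDl sumr_ge0. Qed.

Lemma le_dsum {K : realType} n m (F : 'I_n -> 'I_m -> K) i0 j0 :
  (forall i j, 0 <= F i j) -> F i0 j0 <= \sum_(i < n) \sum_(j < m) F i j.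
Proof.
move=> H; apply: (le_trans (le_sum1 _ (F i0) j0 (H i0))).
apply: (le_sum1 _ (fun i => \sum_(j < m) F i j)) => i; exact: sumr_ge0.
Qed.

Lemma abs_le_sqrt {K : realType} (x T : K) : x ^+ 2 <= T -> `|x| <= Num.sqrt T.
Proof. by move=> h; rewrite -sqrtr_sqr ler_wsqrtr. Qed.

Definition Nf {K : realType} (Y : 'M[K]_3) : K := \sum_(k < 3) \sum_(l < 3) Y k l ^+ 2.
Definition rho {K : realType} (Y : 'M[K]_3) : K := Num.sqrt (Nf Y).

Lemma Y_le_rho {K : realType} (Y : 'M[K]_3) k l : `|Y k l| <= rho Y.
Proof.
apply: abs_le_sqrt; apply: (le_dsum _ _ (fun k l => Y k l ^+ 2)) => i j; exact: sqr_ge0.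
Qed.

Lemma rho_ge0 {K : realType} (Y : 'M[K]_3) : 0 <= rho Y.
Proof. exact: sqrtr_ge0. Qed.

Lemma rho_sqr {K : realType} (Y : 'M[K]_3) : rho Y ^+ 2 = Nf Y.
Proof.
rewrite /rho sqr_sqrtr //; apply: sumr_ge0 => i _; apply: sumr_ge0 => j _; exact: sqr_ge0.
Qed.

Lemma Sm_le {K : realType} (Y : 'M[K]_3) i j : `|Sm Y i j| <= sf Y.
Proof.
apply: abs_le_sqrt; apply: (le_dsum _ _ (fun i j => Sm Y i j ^+ 2)) => ? ?; exact: sqr_ge0.
Qed.

Lemma Nf_Sm {K : realType} (Y : 'M[K]_3) : Nf Y = \sum_(i < 3) Sm Y i i + 3.
Proof.
rewrite /Sm big_split /= exchange_big /Nf.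
have -> : \sum_(i < 3) - ((i == i)%:R : K) = -3.
  rewrite !big_ord_recr big_ord0 /=; ring.
rewrite subrK; apply: eq_bigr => i _; apply: eq_bigr => j _; by rewrite expr2.
Qed.

Lemma Nf_le {K : realType} (Y : 'M[K]_3) : Nf Y <= 3 * sf Y + 3.
Proof.
rewrite Nf_Sm lerD2r.
apply: (le_trans (ler_norm _)); apply: sum3_le => i; exact: Sm_le.
Qed.

Lemma prod_le {K : realType} (a b A B : K) : `|a| <= A -> `|b| <= B -> `|a * b| <= A * B.
Proof. by move=> h1 h2; rewrite normrM ler_pM. Qed.

Definition bnd {K : realType} (u : 'M[K]_3) := forall k l, `|u k l| <= 1.

Lemma dSm_le {K : realType} (Y u : 'M[K]_3) i j : bnd u -> `|dSm Y u i j| <= 6 * rho Y.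
Proof.
move=> hu; have -> : (6:K) * rho Y = 3 * (rho Y * 1 + rho Y * 1) by ring.
apply: sum3_le => k; apply: (le_trans (ler_normD _ _)).
by apply: lerD; apply: prod_le; rewrite ?Y_le_rho ?hu.
Qed.

Lemma d2S_le {K : realType} (u v : 'M[K]_3) i j : bnd u -> bnd v -> `|d2S u v i j| <= 6.
Proof.
move=> hu hv; have -> : (6:K) = 3 * (1 * 1 + 1 * 1) by ring.
apply: sum3_le => k; apply: (le_trans (ler_normD _ _)).
by apply: lerD; apply: prod_le; rewrite ?hu ?hv.
Qed.

Lemma dq_le {K : realType} (Y u : 'M[K]_3) : bnd u -> `|dq Y u| <= 108 * (sf Y * rho Y).
Proof.
move=> hu; have -> : (108:K) * (sf Y * rho Y) = 9 * (2 * (sf Y * (6 * rho Y))) by ring.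
apply: sum33_le => i j; rewrite normrM ger0_norm //; apply: ler_wpM2l => //.
apply: prod_le; [exact: Sm_le|exact: dSm_le].
Qed.

Lemma ds_le {K : realType} (Y u : 'M[K]_3) : bnd u -> 0 < sf Y -> `|ds Y u| <= 54 * rho Y.
Proof.
move=> hu s0; have s2 : 0 <= 2 * sf Y by rewrite mulr_ge0 // ltW.
rewrite /ds normrM normfV (ger0_norm s2).
have key : `|dq Y u| <= (2 * sf Y) * (54 * rho Y).
  apply: (le_trans (dq_le Y u hu)); rewrite le_eqVlt; apply/orP; left; apply/eqP; ring.
have n0 : 2 * sf Y != 0 by rewrite mulf_neq0 // gt_eqF.
rewrite -(mulKf n0 (54 * rho Y)); apply: ler_wpM2l => //.
by rewrite invr_ge0.
Qed.

Lemma d2q_le {K : realType} (Y u v : 'M[K]_3) : bnd u -> bnd v ->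
  `|d2q Y u v| <= 9 * (2 * (6 * rho Y * (6 * rho Y) + sf Y * 6)).
Proof.
move=> hu hv; apply: sum33_le => i j; rewrite normrM ger0_norm //; apply: ler_wpM2l => //.
apply: (le_trans (ler_normD _ _)); apply: lerD; apply: prod_le;
  by [exact: dSm_le|exact: Sm_le|exact: d2S_le].
Qed.

Definition Ac {K : realType} (b c : K) : K := 2^-1 + (3 / 2 + `|c|) / b.
Definition Mc {K : realType} (b c d : K) : K :=
  8748 * (Num.sqrt b * Ac b c) + (9774 + 9720 / d).

Lemma T1_aux {K : realType} (b c s p : K) : 0 < b -> 0 <= s -> 0 < p ->
  p ^+ 2 = (s + c) ^+ 2 + b ->
  b * (s + 1) * (p^-1) ^+ 3 <= Num.sqrt b * Ac b c.
Proof.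
move=> b0 s0 p0 hp.
have hA : s + 1 <= Ac b c * p ^+ 2.
  rewrite /Ac mulrDl.
  have h1 : s + 1 <= p ^+ 2 / 2 + (3 / 2 + `|c|).
    rewrite hp; have := ler_norm c; have := ler_norm (-c); rewrite normrN; have := sqr_ge0 (s + c - 1); nra.
  apply: (le_trans h1); rewrite [2^-1 * _]mulrC lerD2l.
  rewrite -mulrA ler_pMr; last by have := normr_ge0 c; lra.
  rewrite ler_pdivlMl //= mulr1 hp; by have := sqr_ge0 (s + c); lra.
have hb : b <= Num.sqrt b * p.
  rewrite -{1}(sqr_sqrtr (ltW b0)) expr2 ler_wpM2l ?sqrtr_ge0 //.
  rewrite -(gtr0_norm p0) -(sqrtr_sqr p) ler_wsqrtr // hp. by rewrite lerDr sqr_ge0.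
have ip0 : 0 < p^-1 by rewrite invr_gt0.
have -> : (p^-1) ^+ 3 = (p^-1) ^+ 2 * p^-1 by rewrite exprSr.
have e1 : p ^+ 2 * (p^-1) ^+ 2 = 1 by rewrite -exprMn mulfV ?gt_eqF // expr1n.
have e2 : p * p^-1 = 1 by rewrite mulfV ?gt_eqF.
have sb0 := sqrtr_ge0 b.
have A0 : 0 <= Ac b c.
  rewrite /Ac; apply: addr_ge0; first by rewrite invr_ge0; lra.
  apply: divr_ge0; last exact: ltW.
  have := normr_ge0 c; lra.
have t2 : b * (s + 1) * ((p^-1) ^+ 2 * p^-1) <= b * (Ac b c * p ^+ 2) * ((p^-1) ^+ 2 * p^-1).
  have z0 : 0 <= (p^-1) ^+ 2 * p^-1 by apply: mulr_ge0; [apply: exprn_ge0|]; exact: ltW.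
  exact: (ler_wpM2r z0 (ler_wpM2l (ltW b0) hA)).
apply: (le_trans t2).
have -> : b * (Ac b c * p ^+ 2) * ((p^-1) ^+ 2 * p^-1) = b * Ac b c * p^-1 * (p ^+ 2 * (p^-1) ^+ 2) by ring.
rewrite e1 mulr1.
have t3 : b * Ac b c * p^-1 <= Num.sqrt b * p * Ac b c * p^-1.
  exact: (ler_wpM2r (ltW ip0) (ler_wpM2r A0 hb)).
apply: (le_trans t3).
have -> : Num.sqrt b * p * Ac b c * p^-1 = Num.sqrt b * Ac b c * (p * p^-1) by ring.
by rewrite e2 mulr1.
Qed.

Lemma T2_aux {K : realType} (s d D x r : K) : 0 < d -> d < s -> 0 <= r ->
  r ^+ 2 <= 3 * s + 3 -> `|D| <= 9 * (2 * (6 * r * (6 * r) + s * 6)) ->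
  `|x| <= 54 * r * (54 * r) ->
  `|(2 * s)^-1 * (D - 2 * x)| <= 9774 + 9720 / d.
Proof.
move=> d0 ds r0 hr hD hx.
have s0 : 0 < s by exact: lt_trans ds.
have k1 : `|D - 2 * x| <= `|D| + 2 * `|x|.
  apply: (le_trans (ler_normB _ _)); by rewrite normrM ger0_norm.
have k2 : `|D - 2 * x| <= 19548 * s + 19440.
  apply: (le_trans k1).
  have e : 9 * (2 * (6 * r * (6 * r) + s * 6)) = 648 * r ^+ 2 + 108 * s by ring.
  have e' : 54 * r * (54 * r) = 2916 * r ^+ 2 by ring.
  rewrite e in hD; rewrite e' in hx.
  move: (r ^+ 2) hr hD hx => R2 hr hD hx.
  lra.
have i0 : 0 <= (2 * s)^-1 by rewrite invr_ge0; lra.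
rewrite normrM ger0_norm //.
apply: (le_trans (ler_wpM2l i0 k2)).
have -> : (2 * s)^-1 * (19548 * s + 19440) = 9774 + 9720 / s by field; rewrite gt_eqF.
rewrite lerD2l; apply: ler_wpM2l; first lra.
by rewrite lef_pV2 ?posrE // ltW.
Qed.


Lemma Hf_le {K : realType} (b c d : K) (Y u v : 'M[K]_3) : 0 < b -> 0 < d -> d < sf Y ->
  bnd u -> bnd v -> `|Hf b c Y u v| <= Mc b c d.
Proof.
move=> b0 d0 hs hu hv.
have s0 : 0 < sf Y by exact: lt_trans hs.
have p0 := psi_gt0 b c (sf Y) b0.
have hp := psi_sqr b c (sf Y) b0.
have hr : rho Y ^+ 2 <= 3 * sf Y + 3 by rewrite rho_sqr Nf_le.
have r0 := rho_ge0 Y.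
have hdu := ds_le Y u hu s0.
have hdv := ds_le Y v hv s0.
have hD := d2q_le Y u v hu hv.
have hx := prod_le _ _ _ _ hdu hdv.
rewrite /Mc /Hf.
move: (psi b c (sf Y)) p0 hp => p p0 hp.
move: (ds Y u) (ds Y v) (d2q Y u v) (rho Y) (sf Y) hs s0 hp hr r0 hdu hdv hD hx.
move=> du dv D r s hs s0 hp hr r0 hdu hdv hD hx.
apply: (le_trans (ler_normD _ _)); apply: lerD.
  have -> : b * p^-1 ^+ 3 * du * dv = (b * p^-1 ^+ 3) * (du * dv) by ring.
  have ip0 : 0 <= b * p^-1 ^+ 3 by apply: mulr_ge0; [exact: ltW | apply: exprn_ge0; rewrite invr_ge0 ltW].
  rewrite normrM (ger0_norm ip0).
  have hx' : `|du * dv| <= 2916 * (3 * s + 3).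
    have e' : 54 * r * (54 * r) = 2916 * r ^+ 2 by ring.
    rewrite e' in hx; move: (r ^+ 2) hr hx => R2 hr hx; lra.
  apply: (le_trans (ler_wpM2l ip0 hx')).
  have -> : b * p^-1 ^+ 3 * (2916 * (3 * s + 3)) = 8748 * (b * (s + 1) * p^-1 ^+ 3) by ring.
  apply: ler_wpM2l; first lra.
  by apply: T1_aux => //; exact: ltW.
have hw : `|(s + c) * p^-1| <= 1.
  rewrite normrM (gtr0_norm (x := p^-1)) ?invr_gt0 //.
  have hsp : `|s + c| <= p.
    rewrite -(gtr0_norm p0) -(sqrtr_sqr p) -sqrtr_sqr ler_wsqrtr // hp lerDl; exact: ltW.
  have e2 : p * p^-1 = 1 by rewrite mulfV ?gt_eqF.
  rewrite -e2 ler_wpM2r // invr_ge0 ltW //.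
rewrite -[X in _ <= X]mul1r normrM.
apply: ler_pM => //.
exact: (T2_aux s d D (du * dv) r d0 hs r0 hr hD hx).
Qed.


Lemma frob_ge0 {K : realType} {m n} (A : 'M[K]_(m, n)) : 0 <= frob A.
Proof. exact: sqrtr_ge0. Qed.

Lemma frob_entry {K : realType} {m n} (A : 'M[K]_(m, n)) i j : `|A i j| <= frob A.
Proof.
apply: abs_le_sqrt; apply: (le_dsum _ _ (fun i j => A i j ^+ 2)) => ? ?; exact: sqr_ge0.
Qed.

Lemma frob_subrr {K : realType} {m n} (A : 'M[K]_(m, n)) : frob (A - A) = 0.
Proof.
rewrite subrr /frob big1 ?sqrtr0 // => i _; rewrite big1 // => j _.
by rewrite mxE expr2 mulr0.
Qed.

Definition LL {K : realType} (d : K) (X : 'M[K]_3) (g : 'M[K]_3 -> K) :=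
  exists M, forall Y Z, Uset d Y -> Uset d Z -> frob (Y - X) < 1 -> frob (Z - X) < 1 ->
     `|g Y - g Z| <= M * frob (Y - Z).

Lemma LL_bnd {K : realType} {d : K} {X : 'M[K]_3} {g} : Uset d X -> LL d X g ->
  exists C, 0 <= C /\ forall Y, Uset d Y -> frob (Y - X) < 1 -> `|g Y| <= C.
Proof.
move=> UX [M HM]; exists (`|g X| + `|M|); split; first by rewrite addr_ge0.
move=> Y UY hY.
have hX : frob (X - X) < 1 by rewrite frob_subrr ltr01.
have h := HM Y X UY UX hY hX.
have h2 : M * frob (Y - X) <= `|M|.
  apply: (le_trans (ler_norm _)); rewrite normrM (ger0_norm (frob_ge0 _)).
  rewrite -[X in _ <= X]mulr1 ler_wpM2l // ltW //.
have : `|g Y| <= `|g X| + `|g Y - g X|.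
  by rewrite -[X in `|X|](subrK (g X)) addrC ler_normD.
lra.
Qed.

Lemma LL_cst {K : realType} (d : K) X (a : K) : LL d X (fun _ => a).
Proof. by exists 0 => *; rewrite subrr normr0 mul0r. Qed.

Lemma LL_coord {K : realType} (d : K) X i j : LL d X (fun Y => Y i j).
Proof.
exists 1 => Y Z *; rewrite mul1r.
have := frob_entry (Y - Z) i j; by rewrite !mxE.
Qed.

Lemma LL_add {K : realType} {d : K} {X} {f g} : LL d X f -> LL d X g ->
  LL d X (fun Y => f Y + g Y).
Proof.
move=> [M1 H1] [M2 H2]; exists (M1 + M2) => Y Z UY UZ hY hZ.
have := H1 Y Z UY UZ hY hZ; have := H2 Y Z UY UZ hY hZ.
have : `|f Y + g Y - (f Z + g Z)| <= `|f Y - f Z| + `|g Y - g Z|.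
  have -> : f Y + g Y - (f Z + g Z) = (f Y - f Z) + (g Y - g Z) by ring.
  exact: ler_normD.
rewrite mulrDl; lra.
Qed.

Lemma LL_opp {K : realType} {d : K} {X} {f} : LL d X f -> LL d X (fun Y => - f Y).
Proof.
move=> [M1 H1]; exists M1 => Y Z UY UZ hY hZ.
by rewrite -opprD normrN; apply: H1.
Qed.

Lemma LL_sub {K : realType} {d : K} {X} {f g} : LL d X f -> LL d X g ->
  LL d X (fun Y => f Y - g Y).
Proof. move=> h1 h2; exact: (LL_add h1 (LL_opp h2)). Qed.

Lemma LL_mul {K : realType} {d : K} {X} {f g} : Uset d X -> LL d X f -> LL d X g ->
  LL d X (fun Y => f Y * g Y).
Proof.
move=> UX hf hg.
have [Cf [Cf0 HCf]] := LL_bnd UX hf.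
have [Cg [Cg0 HCg]] := LL_bnd UX hg.
move: hf hg => [M1 H1] [M2 H2].
exists (Cf * M2 + Cg * M1) => Y Z UY UZ hY hZ.
have -> : f Y * g Y - f Z * g Z = f Y * (g Y - g Z) + g Z * (f Y - f Z) by ring.
apply: (le_trans (ler_normD _ _)); rewrite !normrM mulrDl -!mulrA.
apply: lerD; apply: ler_pM => //; by [apply: HCf | apply: H2 | apply: HCg | apply: H1].
Qed.

Lemma LL_sum {K : realType} (d : K) X n (F : 'I_n -> 'M[K]_3 -> K) :
  (forall k, LL d X (F k)) -> LL d X (fun Y => \sum_(k < n) F k Y).
Proof.
elim: n F => [|n IH] F H.
  have -> : (fun Y => \sum_(k < 0) F k Y) = fun _ => 0.
    by apply/funext => Y; rewrite big_ord0.
  exact: LL_cst.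
have -> : (fun Y => \sum_(k < n.+1) F k Y) =
   fun Y => \sum_(k < n) F (widen_ord (leqnSn n) k) Y + F ord_max Y.
  by apply/funext => Y; rewrite big_ord_recr.
apply: LL_add; last exact: H.
by apply: IH => k; apply: H.
Qed.

Lemma LL_inv {K : realType} {d : K} {X} {g} (del : K) : 0 < del ->
  (forall Y, Uset d Y -> frob (Y - X) < 1 -> del <= g Y) ->
  LL d X g -> LL d X (fun Y => (g Y)^-1).
Proof.
move=> del0 hg [M H]; exists (M / (del * del)) => Y Z UY UZ hY hZ.
have gY := hg Y UY hY; have gZ := hg Z UZ hZ.
have gY0 : 0 < g Y by exact: lt_le_trans gY.
have gZ0 : 0 < g Z by exact: lt_le_trans gZ.
have -> : (g Y)^-1 - (g Z)^-1 = (g Z - g Y) * (g Y * g Z)^-1.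
  by field; rewrite !gt_eqF.
rewrite normrM (gtr0_norm (x := (g Y * g Z)^-1)) ?invr_gt0 ?mulr_gt0 //.
rewrite -opprB normrN.
have h := H Y Z UY UZ hY hZ.
have hi : (g Y * g Z)^-1 <= (del * del)^-1.
  rewrite lef_pV2 ?posrE ?mulr_gt0 //.
  by apply: ler_pM => //; apply: ltW.
have e : M / (del * del) * frob (Y - Z) = (M * frob (Y - Z)) * (del * del)^-1 by ring.
rewrite e; apply: ler_pM; [exact: normr_ge0| |exact: h|exact: hi].
by rewrite invr_ge0 mulr_ge0 // ltW.
Qed.

Lemma LL_sqrt {K : realType} {d : K} {X} {g} (del : K) : 0 < del ->
  (forall Y, Uset d Y -> frob (Y - X) < 1 -> del <= g Y) ->
  LL d X g -> LL d X (fun Y => Num.sqrt (g Y)).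
Proof.
move=> del0 hg [M H]; exists (M / (2 * Num.sqrt del)) => Y Z UY UZ hY hZ.
have gY := hg Y UY hY; have gZ := hg Z UZ hZ.
have sd0 : 0 < Num.sqrt del by rewrite sqrtr_gt0.
have sY : Num.sqrt del <= Num.sqrt (g Y) by rewrite ler_wsqrtr.
have sZ : Num.sqrt del <= Num.sqrt (g Z) by rewrite ler_wsqrtr.
have S0 : 0 < Num.sqrt (g Y) + Num.sqrt (g Z).
  by apply: (lt_le_trans _ (lerD sY sZ)); rewrite addr_gt0.
have gY0 : 0 <= g Y by apply: le_trans gY; exact: ltW.
have gZ0 : 0 <= g Z by apply: le_trans gZ; exact: ltW.
have e1 : Num.sqrt (g Y) - Num.sqrt (g Z) =
   (g Y - g Z) * (Num.sqrt (g Y) + Num.sqrt (g Z))^-1.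
  have hYY := sqr_sqrtr gY0; have hZZ := sqr_sqrtr gZ0.
  move: (Num.sqrt (g Y)) (Num.sqrt (g Z)) S0 hYY hZZ => a c S0 hYY hZZ.
  rewrite -hYY -hZZ; field; by rewrite gt_eqF.
rewrite e1 normrM (gtr0_norm (x := _^-1)) ?invr_gt0 //.
have h := H Y Z UY UZ hY hZ.
have hi : (Num.sqrt (g Y) + Num.sqrt (g Z))^-1 <= (2 * Num.sqrt del)^-1.
  rewrite lef_pV2 ?posrE ?mulr_gt0 //.
  have := lerD sY sZ; lra.
have e : M / (2 * Num.sqrt del) * frob (Y - Z) = (M * frob (Y - Z)) * (2 * Num.sqrt del)^-1 by ring.
rewrite e; apply: ler_pM; [exact: normr_ge0| |exact: h|exact: hi].
by rewrite invr_ge0 ltW.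
Qed.

Lemma LL_X {K : realType} {d : K} {X} {g} n : Uset d X -> LL d X g ->
  LL d X (fun Y => g Y ^+ n).
Proof.
move=> UX hg; elim: n => [|n IH].
  have -> : (fun Y => g Y ^+ 0) = fun _ => 1 by apply/funext => Y; rewrite expr0.
  exact: LL_cst.
have -> : (fun Y => g Y ^+ n.+1) = fun Y => g Y * g Y ^+ n.
  by apply/funext => Y; rewrite exprS.
exact: LL_mul.
Qed.


Lemma LL_Sm {K : realType} (d : K) X i j : Uset d X -> LL d X (fun Y => Sm Y i j).
Proof.
move=> UX; rewrite /Sm; apply: LL_sub; last exact: LL_cst.
apply: LL_sum => k; apply: LL_mul => //; exact: LL_coord.
Qed.

Lemma LL_dSm {K : realType} (d : K) X v i j : Uset d X -> LL d X (fun Y => dSm Y v i j).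
Proof.
move=> UX; rewrite /dSm; apply: LL_sum => k.
by apply: LL_add; apply: LL_mul => //; [exact: LL_coord|exact: LL_cst|exact: LL_coord|exact: LL_cst].
Qed.

Lemma LL_qf {K : realType} (d : K) X : Uset d X -> LL d X qf.
Proof.
move=> UX; rewrite /qf; apply: LL_sum => i; apply: LL_sum => j.
apply: LL_X => //; exact: LL_Sm.
Qed.

Lemma LL_dq {K : realType} (d : K) X v : Uset d X -> LL d X (fun Y => dq Y v).
Proof.
move=> UX; rewrite /dq; apply: LL_sum => i; apply: LL_sum => j.
apply: LL_mul => //; first exact: LL_cst.
apply: LL_mul => //; [exact: LL_Sm|exact: LL_dSm].
Qed.

Lemma LL_d2q {K : realType} (d : K) X u v : Uset d X -> LL d X (fun Y => d2q Y u v).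
Proof.
move=> UX; rewrite /d2q; apply: LL_sum => i; apply: LL_sum => j.
apply: LL_mul => //; first exact: LL_cst.
apply: LL_add; apply: LL_mul => //; by [exact: LL_dSm|exact: LL_Sm|exact: LL_cst].
Qed.

Lemma U_sf {K : realType} (d : K) Y : Uset d Y -> d < sf Y.
Proof. by rewrite /Uset /= frobS. Qed.

Lemma LL_sf {K : realType} (d : K) X : 0 < d -> Uset d X -> LL d X sf.
Proof.
move=> d0 UX; rewrite /sf.
apply: (LL_sqrt (d ^+ 2)); first by rewrite exprn_gt0.
  move=> Y UY _; have := U_sf d Y UY; rewrite /sf => h.
  have q0 : 0 <= qf Y by apply: sumr_ge0 => i _; apply: sumr_ge0 => j _; exact: sqr_ge0.
  rewrite -(sqr_sqrtr q0) ler_pXn2r ?nnegrE ?sqrtr_ge0 //; [exact: ltW | exact: ltW].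
exact: LL_qf.
Qed.

Lemma LL_ds {K : realType} (d : K) X v : 0 < d -> Uset d X -> LL d X (fun Y => ds Y v).
Proof.
move=> d0 UX; rewrite /ds; apply: LL_mul => //; last exact: LL_dq.
apply: (LL_inv (2 * d)); first by rewrite mulr_gt0.
  move=> Y UY _; have := U_sf d Y UY; lra.
by apply: LL_mul => //; [exact: LL_cst | exact: LL_sf].
Qed.

Lemma LL_psi {K : realType} (b c d : K) X : 0 < b -> 0 < d -> Uset d X ->
  LL d X (fun Y => psi b c (sf Y)).
Proof.
move=> b0 d0 UX; rewrite /psi.
apply: (LL_sqrt (b)) => //.
  by move=> Y _ _; rewrite lerDr sqr_ge0.
apply: LL_add; last exact: LL_cst.
by apply: LL_X => //; apply: LL_add; [exact: LL_sf | exact: LL_cst].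
Qed.

Lemma LL_ipsi {K : realType} (b c d : K) X : 0 < b -> 0 < d -> Uset d X ->
  LL d X (fun Y => (psi b c (sf Y))^-1).
Proof.
move=> b0 d0 UX; apply: (LL_inv (Num.sqrt b)); first by rewrite sqrtr_gt0.
  move=> Y _ _; rewrite /psi ler_wsqrtr // lerDr sqr_ge0 //.
exact: LL_psi.
Qed.

Lemma LL_Hf {K : realType} (b c d : K) X u v : 0 < b -> 0 < d -> Uset d X ->
  LL d X (fun Y => Hf b c Y u v).
Proof.
move=> b0 d0 UX; rewrite /Hf.
have hp := LL_ipsi b c d X b0 d0 UX.
have hs := LL_sf d X d0 UX.
have hu := LL_ds d X u d0 UX.
have hv := LL_ds d X v d0 UX.
have h2 : LL d X (fun Y => 2 * sf Y) by apply: LL_mul => //; exact: LL_cst.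
have hi : LL d X (fun Y => (2 * sf Y)^-1).
  apply: (LL_inv (2 * d)) => //; first by rewrite mulr_gt0.
  move=> Y UY _; have := U_sf d Y UY; lra.
have hd := LL_d2q d X u v UX.
have hb : LL d X (fun _ => b) := LL_cst d X b.
have h3 : LL d X (fun Y => (psi b c (sf Y))^-1 ^+ 3) := LL_X 3 UX hp.
have hsc : LL d X (fun Y => sf Y + c) by apply: LL_add => //; exact: LL_cst.
have hc2 : LL d X (fun _ => 2 : K) := LL_cst d X 2.
apply: LL_add; repeat (first [ assumption | apply: LL_mul => // | apply: LL_sub ]).
Qed.


Lemma quadE {K : realType} n (A : 'M[K]_n) (v : 'rV[K]_n) :
  (v *m A *m v^T) 0 0 = \sum_(j < n) \sum_(i < n) v 0 i * A i j * v 0 j.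
Proof.
rewrite mxE; apply: eq_bigr => j _; rewrite !mxE mulr_suml.
by apply: eq_bigr => i _.
Qed.

Lemma quad_scal {K : realType} n (L : K) (v : 'rV[K]_n) :
  (v *m L%:M *m v^T) 0 0 = L * \sum_(j < n) v 0 j ^+ 2.
Proof.
rewrite mul_mx_scalar -scalemxAl mxE; congr (_ * _).
rewrite mxE; apply: eq_bigr => j _; by rewrite !mxE expr2.
Qed.

Lemma dsum_sq {K : realType} n (w : 'I_n -> K) :
  \sum_(j < n) \sum_(i < n) (w i ^+ 2 + w j ^+ 2) = 2 * n%:R * \sum_(i < n) w i ^+ 2.
Proof.
have e j : \sum_(i < n) (w i ^+ 2 + w j ^+ 2) = \sum_(i < n) w i ^+ 2 + w j ^+ 2 *+ n.
  by rewrite big_split /= sumr_const card_ord.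
rewrite (eq_bigr _ (fun j _ => e j)) big_split /= sumr_const card_ord sumrMnl.
ring.
Qed.

Lemma quad_bound {K : realType} n (A : 'M[K]_n) (M : K) (v : 'rV[K]_n) :
  (forall i j, `|A i j| <= M) ->
  `|(v *m A *m v^T) 0 0| <= M * n%:R * \sum_(j < n) v 0 j ^+ 2.
Proof.
move=> H; rewrite quadE.
have HM i j : `|v 0 i * A i j * v 0 j| <= M / 2 * (v 0 i ^+ 2 + v 0 j ^+ 2).
  have M0 : 0 <= M := le_trans (normr_ge0 _) (H i j).
  rewrite !normrM.
  have h1 : `|A i j| * `|v 0 i| * `|v 0 j| <= M * (`|v 0 i| * `|v 0 j|).
    rewrite -mulrA; apply: ler_wpM2r => //; exact: mulr_ge0.
  rewrite [`|v 0 i| * _]mulrC; apply: (le_trans h1).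
  have e1 : v 0 i ^+ 2 = `|v 0 i| ^+ 2 by rewrite real_normK // num_real.
  have e2 : v 0 j ^+ 2 = `|v 0 j| ^+ 2 by rewrite real_normK // num_real.
  rewrite e1 e2.
  have := sqr_ge0 (`|v 0 i| - `|v 0 j|).
  move: (`|v 0 i|) (`|v 0 j|) => a b h.
  have -> : M / 2 * (a ^+ 2 + b ^+ 2) = M * ((a ^+ 2 + b ^+ 2) / 2) by ring.
  apply: ler_wpM2l => //; lra.
apply: (le_trans (ler_norm_sum _ _ _)).
apply: (le_trans (ler_sum _ (fun j _ => ler_norm_sum _ _ _))).
apply: (le_trans (ler_sum _ (fun j _ => ler_sum _ (fun i _ => HM i j)))).
under eq_bigr do rewrite -mulr_sumr.
rewrite -mulr_sumr dsum_sq.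
set S := \sum_(i < n) v 0 i ^+ 2.
have -> : M / 2 * (2 * n%:R * S) = M * n%:R * S by field.
by [].
Qed.

Lemma loewner_bounds {K : realType} n (A : 'M[K]_n) (M : K) :
  (forall i j, `|A i j| <= M) ->
  (forall v : 'rV[K]_n, 0 <= (v *m (A - - ((M * n%:R)%:M)) *m v^T) 0 0) /\
  (forall v : 'rV[K]_n, 0 <= (v *m ((M * n%:R)%:M - A) *m v^T) 0 0).
Proof.
move=> H; split => v.
- rewrite opprK mulmxDr mulmxDl mxE quad_scal.
  have := quad_bound _ _ _ v H; move: ((v *m A *m v^T) 0 0) => x.
  move=> /ler_normlP [h1 h2]; lra.
- rewrite mulmxBr mulmxBl mxE quad_scal mxE.
  have := quad_bound _ _ _ v H; move: ((v *m A *m v^T) 0 0) => x.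
  move=> /ler_normlP [h1 h2]; lra.
Qed.


Lemma ebasis_bnd {K : realType} k : bnd (@ebasis K k).
Proof.
move=> i j; rewrite /ebasis !mxE.
by case: (_ && _); rewrite ?normr1 ?normr0 ?ler01.
Qed.

Lemma sq_sum_le {K : realType} n (x : 'I_n -> K) : (forall i, 0 <= x i) ->
  \sum_(i < n) x i ^+ 2 <= (\sum_(i < n) x i) ^+ 2.
Proof.
elim: n x => [|n IH] x H; first by rewrite !big_ord0 expr0n /=.
rewrite !big_ord_recr /=.
have h := IH (fun i => x (widen_ord (leqnSn n) i)) (fun i => H _).
have S0 : 0 <= \sum_(i < n) x (widen_ord (leqnSn n) i) by apply: sumr_ge0 => i _.
have x0 := H ord_max.
move: (\sum_(i < n) x (widen_ord (leqnSn n) i) ^+ 2) (\sum_(i < n) x (widen_ord (leqnSn n) i)) (x ord_max) h S0 x0.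
move=> A B C h S0 x0.
have : 0 <= B * C by exact: mulr_ge0.
rewrite expr2 in h *; rewrite !expr2; nra.
Qed.

Lemma frob_le_sum {K : realType} {m n} (A : 'M[K]_(m, n)) :
  frob A <= \sum_(i < m) \sum_(j < n) `|A i j|.
Proof.
have T0 : 0 <= \sum_(i < m) \sum_(j < n) `|A i j|.
  by apply: sumr_ge0 => i _; apply: sumr_ge0 => j _.
rewrite /frob -(ger0_norm T0) -sqrtr_sqr ler_wsqrtr //.
apply: (le_trans _ (sq_sum_le _ (fun i => \sum_(j < n) `|A i j|) _)); last first.
  by move=> i; apply: sumr_ge0.
apply: ler_sum => i _.
apply: (le_trans _ (sq_sum_le _ (fun j => `|A i j|) _)); last by move=> j.
apply: ler_sum => j _; by rewrite real_normK // num_real.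
Qed.

Lemma lipschitz_P5 {K : realType} (b c d : K) : 0 < b -> 0 < d ->
  hessian_locally_lipschitz_on (Uset d) (P5 b c).
Proof.
move=> b0 d0 X UX.
have H : forall i j : 'I_(3 * 3), exists M : K, forall Y Z, Uset d Y -> Uset d Z ->
    frob (Y - X) < 1 -> frob (Z - X) < 1 ->
    `|Hf b c Y (ebasis i) (ebasis j) - Hf b c Z (ebasis i) (ebasis j)| <= M * frob (Y - Z).
  move=> i j; exact: LL_Hf.
have H' : forall i, exists Mi : 'I_(3 * 3) -> K, forall j Y Z, Uset d Y -> Uset d Z ->
    frob (Y - X) < 1 -> frob (Z - X) < 1 ->
    `|Hf b c Y (ebasis i) (ebasis j) - Hf b c Z (ebasis i) (ebasis j)| <= Mi j * frob (Y - Z).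
  move=> i; have [Mi HMi] := choice (H i); by exists Mi.
have [M HM] := choice H'.
exists 1, (\sum_(i < 3 * 3) \sum_(j < 3 * 3) M i j); split; first exact: ltr01.
move=> Y Z UY UZ hY hZ.
rewrite (hessE b c d Y b0 d0 UY) (hessE b c d Z b0 d0 UZ).
apply: (le_trans (frob_le_sum _)).
rewrite mulr_suml; apply: ler_sum => i _; rewrite mulr_suml; apply: ler_sum => j _.
by rewrite !mxE; apply: HM.
Qed.

Theorem lemma11 (K : realType) (b c d : K) (hb : 0 < b) (hd : 0 < d) :
  open (Uset d) /\
  twice_differentiable_on (Uset d) (P5 b c) /\
  hessian_locally_lipschitz_on (Uset d) (P5 b c) /\
  exists L : K, forall X : 'M[K]_3, Uset d X ->
    loewner_le (- (L%:M)) (hessian (P5 b c) X) /\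
    loewner_le (hessian (P5 b c) X) (L%:M).
Proof.
split; first exact: open_U.
split; first exact: twice_P5.
split; first exact: lipschitz_P5.
exists (Mc b c d * (3 * 3)%:R) => X UX.
have hE i j : `|hessian (P5 b c) X i j| <= Mc b c d.
  rewrite (hessE b c d X hb hd UX) mxE.
  apply: Hf_le => //; [exact: U_sf d X UX | exact: ebasis_bnd | exact: ebasis_bnd].
have [h1 h2] := loewner_bounds _ _ _ hE.
by split; [exact: h1 | exact: h2].
Qed.
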